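(* Let $k=2$, $\lambda>0$ and $0<\theta<1$, and $F(x,y,\theta)=\frac{1+x+\theta y}{1+x+y}$. If either $\theta\ge1/3$, or $\theta<1/3$ and $\lambda\le\frac{9}{4(1-3\theta)}$, then the system $$z^-_1=\lambda F(z^-_1,z^+_2,\theta)^2,\ z^+_1=\lambda F(z^+_1,z^-_2,\theta)^2,\ z^-_2=\lambda F(z^-_2,z^+_1,\theta)^2,\ z^+_2=\lambda F(z^+_2,z^-_1,\theta)^2$$ has the unique solution $(x^*,x^*,x^*,x^* )$ in $(0,\infty)^4$, where $x^*$ is the unique positive solution of $x=\lambda\bigl(\frac{1+(1+\theta)x}{1+2x}\bigr)^2$. *)

(* Defs.v *)
From Stdlib Require Import Reals.
Open Scope R_scope.

Definition F (x y theta : R) : R := (1 + x + theta * y) / (1 + x + y).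

(* The k = 2 system in unknowns (z1m, z1p, z2m, z2p) = (z^-_1, z^+_1, z^-_2, z^+_2). *)
Definition system2 (lam theta z1m z1p z2m z2p : R) : Prop :=
  z1m = lam * (F z1m z2p theta) ^ 2 /\
  z1p = lam * (F z1p z2m theta) ^ 2 /\
  z2m = lam * (F z2m z1p theta) ^ 2 /\
  z2p = lam * (F z2p z1m theta) ^ 2.

(* Main.v *)
Require Import Defs.
From Stdlib Require Import Reals Lra Psatz.
Open Scope R_scope.

Lemma key (u v c th : R) : 0 < u -> 0 < v -> 0 < c -> 0 < th < 1 ->
  (1/3 <= th \/ (th < 1/3 /\ c*c*(4*(1-3*th)) <= 9)) ->
  u*(1+u*u+v*v) = c*(1+u*u+th*(v*v)) ->
  v*(1+v*v+u*u) = c*(1+v*v+th*(u*u)) -> u = v.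
Proof.
  intros hu hv hc ht hcond E1 E2.
  destruct (Req_dec u v) as [|Hne]; [assumption|exfalso].
  assert (Hd : u - v <> 0) by lra.
  assert (D : 1+u*u+v*v = c*(1-th)*(u+v)).
  { apply (Rmult_eq_reg_l (u-v)); [|exact Hd]. nra. }
  assert (D2 : (1-th)*((u+v)*(u+v)) = 2 + (1+th)*(u*u+v*v)).
  { apply (Rmult_eq_reg_l c); [|lra].
    assert (S : (u+v)*(1+u*u+v*v) = c*(2+(1+th)*(u*u+v*v))) by nra.
    rewrite D in S. nra. }
  set (s := u+v) in *.
  assert (P : (1+th)*(u*v) = 1 + th*(s*s)).
  { unfold s in *. nra. }
  assert (Hstr : 4*(u*v) < s*s).
  { unfold s. assert (0 < (u-v)*(u-v)) by (destruct (Rlt_or_le u v); nra). nra. }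
  assert (Ht : 4 < s*s*(1-3*th)) by nra.
  assert (Hc : c*(1+th)*s = s*s - 1).
  { apply (Rmult_eq_reg_l (1-th)); [|lra].
    assert (1 + s*s - 2*(u*v) = c*(1-th)*s) by (unfold s in *; nra).
    nra. }
  destruct hcond as [h3|[h3 hl]].
  - assert (s*s*(1-3*th) <= 0).
    { assert (0 <= s*s) by nra. nra. }
    lra.
  - set (t := s*s) in *. set (m := 1-3*th) in *.
    assert (hm : 0 < m) by (unfold m; lra).
    assert (Esq : c*c*((1+th)*(1+th))*t = (t-1)*(t-1)).
    { rewrite <- Hc. unfold t. ring. }
    assert (H9 : 9*((1+th)*(1+th)) = (4-m)*(4-m)) by (unfold m; ring).
    assert (Hle : 4*m*((t-1)*(t-1)) <= (4-m)*(4-m)*t).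
    { rewrite <- Esq, <- H9.
      assert (0 <= (1+th)*(1+th)*t) by (unfold t; nra).
      nra. }
    set (e := m*t - 4).
    assert (he : 0 < e) by (unfold e; lra).
    assert (htm : m < 4*t).
    { assert (m <= 1) by (unfold m; lra).
      assert (1 < t) by nra. lra. }
    assert (Hid : 4*m*((t-1)*(t-1)) - (4-m)*(4-m)*t = e*(4*t-m)) by (unfold e; ring).
    assert (0 < e*(4*t-m)) by (apply Rmult_lt_0_compat; lra).
    lra.
Qed.

Definition G (th x : R) := (1 + (1+th)*x)/(1+2*x).

Lemma G_pos th x : 0 < th < 1 -> 0 <= x -> 0 < G th x.
Proof. intros. unfold G. apply Rdiv_lt_0_compat; nra. Qed.

Lemma G_dec th x y : 0 < th < 1 -> 0 <= x -> x < y -> G th y < G th x.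
Proof.
  intros ht hx hxy.
  assert (G th x - G th y = (1-th)*(y-x)/((1+2*x)*(1+2*y))).
  { unfold G. field. split; lra. }
  assert (0 < (1-th)*(y-x)/((1+2*x)*(1+2*y))).
  { apply Rdiv_lt_0_compat; nra. }
  lra.
Qed.

Lemma uniq_fix lam th x y : 0 < lam -> 0 < th < 1 -> 0 < x -> 0 < y ->
  x = lam * G th x ^ 2 -> y = lam * G th y ^ 2 -> x = y.
Proof.
  intros hl ht hx hy Ex Ey.
  destruct (Rtotal_order x y) as [h|[h|h]]; auto; exfalso.
  - pose proof (G_dec th x y ht (Rlt_le _ _ hx) h). pose proof (G_pos th y ht (Rlt_le _ _ hy)).
    assert (G th y ^2 < G th x ^2) by nra. nra.
  - pose proof (G_dec th y x ht (Rlt_le _ _ hy) h). pose proof (G_pos th x ht (Rlt_le _ _ hx)).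
    assert (G th x ^2 < G th y ^2) by nra. nra.
Qed.

Lemma pair_eq lam th a b : 0 < lam -> 0 < th < 1 ->
  (1/3 <= th \/ (th < 1/3 /\ lam <= 9 / (4 * (1 - 3 * th)))) ->
  0 < a -> 0 < b -> a = lam * (F a b th)^2 -> b = lam * (F b a th)^2 -> a = b.
Proof.
  intros hl ht hcond ha hb Ea Eb.
  set (u := sqrt a). set (v := sqrt b). set (c := sqrt lam).
  assert (hu : 0 < u) by (apply sqrt_lt_R0; lra).
  assert (hv : 0 < v) by (apply sqrt_lt_R0; lra).
  assert (hc : 0 < c) by (apply sqrt_lt_R0; lra).
  assert (Ua : u*u = a) by (apply sqrt_sqrt; lra).
  assert (Vb : v*v = b) by (apply sqrt_sqrt; lra).
  assert (Cl : c*c = lam) by (apply sqrt_sqrt; lra).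
  assert (Fa : 0 < F a b th) by (unfold F; apply Rdiv_lt_0_compat; nra).
  assert (Fb : 0 < F b a th) by (unfold F; apply Rdiv_lt_0_compat; nra).
  assert (Hu : u = c * F a b th).
  { assert ((u - c*F a b th)*(u + c*F a b th) = 0) by (rewrite <- Cl in Ea; nra).
    assert (0 < c * F a b th) by nra.
    destruct (Rmult_integral _ _ H); nra. }
  assert (Hv : v = c * F b a th).
  { assert ((v - c*F b a th)*(v + c*F b a th) = 0) by (rewrite <- Cl in Eb; nra).
    assert (0 < c * F b a th) by nra.
    destruct (Rmult_integral _ _ H); nra. }
  assert (E1 : u*(1+u*u+v*v) = c*(1+u*u+th*(v*v))).
  { rewrite Ua, Vb. rewrite Hu at 1. unfold F. field. lra. }
  assert (E2 : v*(1+v*v+u*u) = c*(1+v*v+th*(u*u))).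
  { rewrite Ua, Vb. rewrite Hv at 1. unfold F. field. lra. }
  assert (huv : u = v).
  { apply (key u v c th hu hv hc ht); auto.
    destruct hcond as [h|[h1 h2]]; [left; exact h|right; split; [exact h1|]].
    rewrite Cl.
    assert (0 < 4*(1-3*th)) by lra.
    apply (Rmult_le_compat_r (4*(1-3*th))) in h2; [|lra].
    replace (9 / (4 * (1 - 3 * th)) * (4 * (1 - 3 * th))) with 9 in h2 by (field; lra).
    exact h2. }
  rewrite <- Ua, <- Vb, huv. reflexivity.
Qed.

Theorem mainTheorem15 (lam theta : R) :
  0 < lam -> 0 < theta < 1 ->
  (1/3 <= theta \/ (theta < 1/3 /\ lam <= 9 / (4 * (1 - 3 * theta)))) ->
  exists xs : R,
    (0 < xs /\ xs = lam * ((1 + (1 + theta) * xs) / (1 + 2 * xs)) ^ 2) /\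
    (forall x : R, 0 < x -> x = lam * ((1 + (1 + theta) * x) / (1 + 2 * x)) ^ 2 -> x = xs) /\
    system2 lam theta xs xs xs xs /\
    (forall z1m z1p z2m z2p : R,
        0 < z1m -> 0 < z1p -> 0 < z2m -> 0 < z2p ->
        system2 lam theta z1m z1p z2m z2p ->
        z1m = xs /\ z1p = xs /\ z2m = xs /\ z2p = xs).
Proof.
  intros hl ht hcond.
  set (h := fun x => x*(1+2*x)^2 - lam*(1+(1+theta)*x)^2).
  assert (hc : continuity h) by (unfold h; reg).
  assert (h0 : h 0 < 0) by (unfold h; lra).
  assert (hL : 0 < h lam).
  { unfold h.
    assert (0 < 1+(1+theta)*lam) by nra.
    assert (1+(1+theta)*lam < 1+2*lam) by nra.
    assert ((1+(1+theta)*lam)^2 < (1+2*lam)^2) by nra. nra. }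
  destruct (IVT h 0 lam hc hl h0 hL) as [xs [[hx0 hx1] hxs]].
  assert (xpos : 0 < xs).
  { destruct hx0 as [|e]; auto. subst xs. lra. }
  assert (fixp : xs = lam * G theta xs ^ 2).
  { unfold G, h in *.
    assert (Hq : lam * ((1 + (1 + theta) * xs) / (1 + 2 * xs)) ^ 2
               = lam * (1 + (1 + theta) * xs) ^ 2 / (1 + 2 * xs) ^ 2) by (field; lra).
    rewrite Hq. apply (Rmult_eq_reg_r ((1+2*xs)^2)); [|nra].
    field_simplify; [|lra]. lra. }
  exists xs. unfold G in fixp.
  split; [split; auto|].
  split.
  { intros x hx Ex. apply (uniq_fix lam theta x xs); auto. }
  assert (Fx : forall x, F x x theta = (1 + (1 + theta) * x) / (1 + 2 * x)).
  { intro x. unfold F. f_equal; ring. }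
  split.
  { unfold system2. rewrite Fx. repeat split; exact fixp. }
  intros z1m z1p z2m z2p h1 h2 h3 h4 [E1 [E2 [E3 E4]]].
  assert (e1 : z1m = z2p) by (apply (pair_eq lam theta); auto).
  assert (e2 : z1p = z2m) by (apply (pair_eq lam theta); auto).
  subst z2p z2m. rewrite Fx in E1, E2.
  assert (z1m = xs) by (apply (uniq_fix lam theta); auto).
  assert (z1p = xs) by (apply (uniq_fix lam theta); auto).
  subst; auto.
Qed.
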